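(* Let $p>2$ be a prime, $q=p^h$, and let $\mathcal{F}$ be the projective closure of $ax^ny^m+x^n+y^m=1$ over $\mathbb{F}_q$, where $a\in\mathbb{F}_q$, $a\neq0$, $a\neq-1$. Then for all positive integers $m,n$ with $p\nmid mn$, $\mathcal{F}$ is classical with respect to lines.
   Context: With $\varphi=(1,x,y)$, $\tau$ a separating element of the function field and $D^{(k)}_\tau$ Hasse derivatives, the order sequence w.r.t. lines is the lexicographically smallest $\varepsilon_0<\varepsilon_1<\varepsilon_2$ with $\det(D^{(\varepsilon_i)}_\tau\varphi_j)\neq0$; the curve is classical w.r.t. lines if this sequence is $(0,1,2)$. *)

(* Defs.v *)
From HB Require Import structures.
From mathcomp Require Import all_boot all_order all_algebra all_field.
Set Implicit Arguments. Unset Strict Implicit. Unset Printing Implicit Defensive.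
Import Order.TTheory GRing.Theory.
Local Open Scope ring_scope.

(* The function field of the curve is modelled abstractly as a field K
   together with the embedding iota : F_q -> K of the constant field. *)
Section FunctionField.
Variables (F : fieldType) (K : fieldType) (iota : {rmorphism F -> K}).

Definition in_Ft (t z : K) : Prop :=
  exists P Q : {poly F}, (map_poly iota Q).[t] != 0 /\
    z = (map_poly iota P).[t] / (map_poly iota Q).[t].

Definition transcendental (t : K) : Prop :=
  forall P : {poly F}, P != 0 -> (map_poly iota P).[t] != 0.

Definition separating (t : K) : Prop :=
  transcendental t /\
  forall z : K, exists g : {poly K},
    [/\ g != 0, (forall i, in_Ft t g`_i), root g z & separable_poly g].

(* evaluation of a bivariate polynomial (inner variable x, outer y) *)
Definition ev2 (x y : K) (P : {poly {poly F}}) : K :=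
  (map_poly (fun c : {poly F} => (map_poly iota c).[x]) P).[y].

Definition generated_by (x y : K) : Prop :=
  forall z : K, exists P Q : {poly {poly F}},
    ev2 x y Q != 0 /\ z = ev2 x y P / ev2 x y Q.

Definition hasse_derivation (t : K) (D : nat -> K -> K) : Prop :=
  [/\ forall u, D 0%N u = u,
      forall k u v, D k (u + v) = D k u + D k v,
      forall k u v, D k (u * v) = \sum_(i < k.+1) D i u * D (k - i)%N v,
      forall k c, (0 < k)%N -> D k (iota c) = 0 &
      D 1%N t = 1 /\ forall k, (1 < k)%N -> D k t = 0].

Definition phi (x y : K) (j : 'I_3) : K := nth 0 [:: 1; x; y] j.

Definition wronsk (D : nat -> K -> K) (x y : K) (e0 e1 e2 : nat) : K :=
  \det (\matrix_(i < 3, j < 3) D (nth 0%N [:: e0; e1; e2] i) (phi x y j)).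

Definition lex_lt (a0 a1 a2 b0 b1 b2 : nat) : bool :=
  (a0 < b0)%N || ((a0 == b0) && ((a1 < b1)%N || ((a1 == b1) && (a2 < b2)%N))).

Definition order_sequence (D : nat -> K -> K) (x y : K) (e0 e1 e2 : nat) : Prop :=
  [/\ (e0 < e1 < e2)%N, wronsk D x y e0 e1 e2 != 0 &
      forall f0 f1 f2, (f0 < f1 < f2)%N -> wronsk D x y f0 f1 f2 != 0 ->
        ~~ lex_lt f0 f1 f2 e0 e1 e2].

Definition classical_wrt_lines (x y : K) : Prop :=
  forall (t : K) (D : nat -> K -> K), separating t -> hasse_derivation t D ->
    order_sequence D x y 0 1 2.

End FunctionField.

(* Main.v *)
Require Import Defs.
From HB Require Import structures.
From mathcomp Require Import all_boot all_order all_algebra all_field.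
From mathcomp Require Import ring.
Import GRing.Theory.
Set Implicit Arguments. Unset Strict Implicit.
Local Open Scope ring_scope.

Section Der.
Variable K : fieldType.
Variable d : K -> K.
Hypothesis dD : forall u v, d (u + v) = d u + d v.
Hypothesis dM : forall u v, d (u * v) = u * d v + d u * v.

Lemma der0 : d 0 = 0.
Proof. have h := dD 0 0; rewrite addr0 in h; apply: (addrI (d 0)); by rewrite addr0 -h. Qed.

Lemma der1 : d 1 = 0.
Proof. have h := dM 1 1; rewrite !mulr1 !mul1r in h; apply: (addrI (d 1)); by rewrite addr0 -h. Qed.

Lemma derN u : d (- u) = - d u.
Proof. apply/eqP; rewrite -subr_eq0 opprK -dD addNr der0 //. Qed.

Lemma derB u v : d (u - v) = d u - d v.
Proof. by rewrite dD derN. Qed.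

Lemma derX u k : d (u ^+ k.+1) = u ^+ k * d u *+ k.+1.
Proof.
elim: k => [|k IH]; first by rewrite expr1 expr0 mul1r.
rewrite exprS dM IH -mulrnAr mulrA -exprS.
by rewrite [d u * _]mulrC mulrnAr -mulrSr.
Qed.

Lemma der_nat k : d k%:R = 0.
Proof. elim: k => [|k IH]; first by rewrite der0. by rewrite mulrS dD der1 IH addr0. Qed.

Lemma der_div u v : v != 0 -> d u = 0 -> d v = 0 -> d (u / v) = 0.
Proof.
move=> v0 du dv.
have : d (u / v * v) = 0 by rewrite divfK.
rewrite dM dv mulr0 add0r => /eqP; rewrite mulf_eq0 (negbTE v0) orbF => /eqP //.
Qed.

Lemma der_horner (g : {poly K}) z :
  (forall i, d g`_i = 0) -> d g.[z] = g^`().[z] * d z.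
Proof.
elim/poly_ind: g => [|q c IH] H.
  by rewrite horner0 deriv0 horner0 mul0r der0.
rewrite hornerMXaddC derivMXaddC hornerD hornerMX dD dM.
have Hc : d c = 0.
  by have := H 0%N; rewrite coefD coefMX coefC eqxx add0r.
rewrite Hc addr0 IH; first by ring.
move=> i; have := H i.+1; rewrite coefD coefMX coefC /= addr0 //.
Qed.

End Der.

Section Main.
Variables (F : fieldType) (K : fieldType) (iota : {rmorphism F -> K}).

Definition isder (d : K -> K) :=
  (forall u v, d (u + v) = d u + d v) /\ (forall u v, d (u * v) = u * d v + d u * v).

Lemma der_map (d : K -> K) (c : {poly F}) z : isder d -> (forall c, d (iota c) = 0) ->
  d (map_poly iota c).[z] = (map_poly iota c)^`().[z] * d z.
Proof.
move=> [dD dM] dc; apply: der_horner => // i.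
by rewrite coef_map /= dc.
Qed.

Lemma der_map0 (d : K -> K) (c : {poly F}) z : isder d -> (forall c, d (iota c) = 0) ->
  d z = 0 -> d (map_poly iota c).[z] = 0.
Proof. by move=> hd dc dz; rewrite der_map // dz mulr0. Qed.

Lemma der_sep_zero (t : K) (E : K -> K) : isder E -> (forall c, E (iota c) = 0) ->
  E t = 0 -> separating iota t -> forall z, E z = 0.
Proof.
move=> hE Ec Et [_ hs] z.
have [ED EM] := hE.
have Ft : forall w, in_Ft iota t w -> E w = 0.
  move=> w [P [Q [Q0 ->]]].
  by apply: (der_div EM) => //; apply: der_map0.
have [g [g0 gF gz gsep]] := hs z.
have := der_horner ED EM z (fun i => Ft _ (gF i)).
rewrite (eqP gz) (der0 ED) => /esym /eqP; rewrite mulf_eq0 => /orP [|/eqP //].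
have := coprimep_root _ gz.
move: gsep; rewrite unlock => gsep.
by move/(_ _ gsep)/negbTE ->.
Qed.


Lemma det3 (R0 : fieldType) (M : 'M[R0]_3) :
  \det M = M 0 0 * (M 1 1 * M 2 2 - M 1 2 * M 2 1)
         - M 1 0 * (M 0 1 * M 2 2 - M 0 2 * M 2 1)
         + M 2 0 * (M 0 1 * M 1 2 - M 0 2 * M 1 1).
Proof.
rewrite (expand_det_col _ 0) !big_ord_recl big_ord0 /cofactor.
rewrite !(expand_det_col _ 0) !big_ord_recl !big_ord0 /cofactor.
rewrite !det_mx11 !mxE /=.
pose f := fun i j : nat => M (inord i) (inord j).
have H : forall i j : 'I_3, M i j = f (val i) (val j) by move=> i j; rewrite /f !inord_val.
rewrite !H /=.
rewrite /bump /=.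
ring.
Qed.
Lemma key_alg (R0 : comRingType) (x y A e s de ds X1 dX1 mm nn : R0) :
  let P := (1 - x * X1) * (1 + A * (x * X1)) in
  let dP := - (e * X1 + x * dX1) * (1 + A * (x * X1)) + (1 - x * X1) * (A * (e * X1 + x * dX1)) in
  let S := mm * P * s + nn * (1 + A) * X1 * e * y in
  let S' := mm * (dP * s + P * ds) + nn * (1 + A) * (dX1 * e * y + X1 * de * y + X1 * e * s) in
  let R := x * dX1 + e * X1 - nn * X1 * e in
  let u := x * X1 in
  let k' := nn * (1 + A) in
  mm ^+ 2 * x * P ^+ 2 * (e * ds - s * de) + k' * e ^+ 3 * y * X1 *
     (mm * (nn - 1) + (- k' - mm * (A - 1)) * u + mm * A * (nn + 1) * u ^+ 2)
  = mm * x * P * e * S' - (mm * x * e * dP + k' * x * X1 * e ^+ 2 + mm * x * P * de) * S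
    + k' * e ^+ 2 * y * (mm * x * X1 * (A - 1 - 2 * A * u) - mm * P) * R.
Proof. move=> P dP S S' R u k'; rewrite {}/S {}/S' {}/R {}/u {}/k' {}/dP {}/P. ring. Qed.

Lemma S_alg (R0 : comRingType) (x y A e s X1 Y1 mm nn : R0) :
  let u := x * X1 in let v := y * Y1 in
  let h0 := A * u * v + u + v - 1 in
  let h1 := A * u * (Y1 * s * mm) + A * (X1 * e * nn) * v + X1 * e * nn + Y1 * s * mm in
  mm * ((1 - x * X1) * (1 + A * (x * X1))) * s + nn * (1 + A) * X1 * e * y =
  (1 + A * u) * y * h1 - h0 * (mm * s * (1 + A * u) + A * nn * X1 * e * y).
Proof. move=> u v h0 h1; rewrite {}/h0 {}/h1 {}/u {}/v. ring. Qed.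

Lemma poly_nz (R : fieldType) (q : {poly R}) : q.[0] != 0 -> q != 0.
Proof. by apply: contraNneq => ->; rewrite horner0. Qed.

Lemma hasse_facts (t : K) (D : nat -> K -> K) : hasse_derivation iota t D ->
  isder (D 1%N) /\ forall u v, D 2%N (u * v) = u * D 2%N v + D 1%N u * D 1%N v + D 2%N u * v.
Proof.
move=> [D0 DD DM Dc [Dt1 Dt2]]; split; first split.
- exact: DD 1%N.
- by move=> u v; rewrite DM !big_ord_recl big_ord0 /= !D0 addr0 addrC.
- by move=> u v; rewrite DM !big_ord_recl big_ord0 /= !D0 addr0 addrA.
Qed.

End Main.

Lemma key_alg2 (R0 : comRingType) (x y A e s de ds X1 dX1 mm nn : R0) :
  mm * ((1 - x * X1) * (1 + A * (x * X1))) * s + nn * (1 + A) * X1 * e * y = 0 ->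
  mm * ((- (e * X1 + x * dX1) * (1 + A * (x * X1)) + (1 - x * X1) * (A * (e * X1 + x * dX1))) * s
        + ((1 - x * X1) * (1 + A * (x * X1))) * ds)
    + nn * (1 + A) * (dX1 * e * y + X1 * de * y + X1 * e * s) = 0 ->
  x * dX1 + e * X1 - nn * X1 * e = 0 ->
  mm ^+ 2 * x * ((1 - x * X1) * (1 + A * (x * X1))) ^+ 2 * (e * ds - s * de)
  + nn * (1 + A) * e ^+ 3 * y * X1 *
     (mm * (nn - 1) + (- (nn * (1 + A)) - mm * (A - 1)) * (x * X1) + mm * A * (nn + 1) * (x * X1) ^+ 2) = 0.
Proof.
move=> hS hS' hR.
have := key_alg x y A e s de ds X1 dX1 mm nn; cbv zeta.
by rewrite hS hS' hR !(mulr0, addr0, subr0).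
Qed.

From mathcomp Require Import zify.

Lemma q_nz (R0 : fieldType) (mm nn a : R0) (n : nat) : (0 < n)%N -> mm != 0 -> a != 0 -> (2 : R0) != 0 ->
  (mm * (nn - 1))%:P + (- (nn * (1 + a)) - mm * (a - 1)) *: 'X^n
     + (mm * a * (nn + 1)) *: 'X^(n + n) != 0.
Proof.
move=> n0 mm0 a0 two0; apply/eqP => qz.
have c0 := congr1 (fun r : {poly R0} => r`_0) qz.
have c2 := congr1 (fun r : {poly R0} => r`_(n + n)) qz.
move: c0 c2 => /=; rewrite !coefD !coefC !coefZ !coefXn /=.
have -> : (n + n == n)%N = false by apply/negbTE/eqP; lia.
have -> : (0 == n)%N = false by apply/negbTE/eqP; lia.
have -> : (0 == n + n)%N = false by apply/negbTE/eqP; lia.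
have -> : (n + n == 0)%N = false by apply/negbTE/eqP; lia.
rewrite eqxx !mulr0 !addr0 !add0r mulr1 => /eqP c0 /eqP c2.
move: c0; rewrite mulf_eq0 (negbTE mm0) /= subr_eq0 => /eqP c0.
move: c2; rewrite !mulf_eq0 (negbTE mm0) (negbTE a0) /= c0 => c2.
by move: two0; rewrite c2.
Qed.

From mathcomp Require Import zify.

Unset Implicit Arguments.
Theorem proposition4p1 (p h : nat) (F : finFieldType) (K : fieldType)
    (iota : {rmorphism F -> K}) (a : F) (x y : K) (m n : nat) :
  prime p -> (2 < p)%N -> (0 < h)%N -> #|F| = (p ^ h)%N ->
  a != 0 -> a != -1 ->
  (0 < m)%N -> (0 < n)%N -> ~~ (p %| m * n)%N ->
  iota a * x ^+ n * y ^+ m + x ^+ n + y ^+ m = 1 ->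
  transcendental iota x -> generated_by iota x y ->
  classical_wrt_lines iota x y.
Proof.
move=> pr p2 h0 cardF a0 a1 m0 n0 pmn Heq trx gen t D tsep hD.
split; first by [].
2:{ move=> f0 f1 f2 /andP[h01 h12] _; rewrite /lex_lt.
    apply/negP => /orP[|/andP[/eqP e0 /orP[|/andP[/eqP e1]]]]; lia. }
have pF : p \in [pchar F] := card_finPcharP cardF pr.
have nzF : forall k, ~~ (p %| k)%N -> (k%:R : F) != 0 by move=> k; rewrite (dvdn_pcharf pF).
have nzK : forall k, ~~ (p %| k)%N -> (k%:R : K) != 0.
  by move=> k hk; rewrite -(rmorph_nat iota) fmorph_eq0 nzF.
have pm : ~~ (p %| m)%N by apply: contra pmn => /dvdn_mulr ->.
have pn : ~~ (p %| n)%N by apply: contra pmn => /dvdn_mull ->.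
have p2n : ~~ (p %| 2)%N by apply/negP => /dvdn_leq; lia.
have [D0 DD DM Dc [Dt1 Dt2]] := hD.
have [[dD dM] D2M] := hasse_facts hD.
set d := D 1%N in dD dM D2M Dt1 *.
have dc : forall c, d (iota c) = 0 by move=> c; exact: Dc.
have two0 : (2 : K) != 0 by exact: (nzK 2%N).
have D2E : forall u, D 2%N u = d (d u) / 2.
  pose E := fun u => D 2%N u - d (d u) / 2.
  have hE : isder E.
    split=> u v; rewrite /E.
      by rewrite DD dD dD; field.
    by rewrite D2M !dM dD !dM; field.
  have := der_sep_zero hE _ _ tsep.
  have d0 := der0 dD; have d1 := der1 dM.
  move=> /(_ _ _) H u; apply/eqP; rewrite -subr_eq0; apply/eqP; apply: H.
  - by move=> c; rewrite /E Dc // dc d0 mul0r subrr.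
  - by rewrite /E Dt2 // Dt1 d1 mul0r subrr.
have d0 := der0 dD; have d1 := der1 dM.
have Dk1 : forall k, (0 < k)%N -> D k 1 = 0 by move=> k k0; rewrite -(rmorph1 iota) Dc.
rewrite /wronsk det3 !mxE /= /phi /= !D0 !Dk1 // !D2E -/d.
have -> : 1 * (d x * (d (d y) / 2) - d y * (d (d x) / 2)) -
  0 * (x * (d (d y) / 2) - y * (d (d x) / 2)) +
  0 * (x * d y - y * d x) = (d x * d (d y) - d y * d (d x)) / 2 by field.
rewrite mulf_neq0 ?invr_neq0 //.
case: n n0 pn pmn Heq trx => [//|n1] n0 pn pmn Heq trx.
case: m m0 pm pmn Heq => [//|m1] m0 pm pmn Heq.
set A := iota a in Heq *.
set X1 := x ^+ n1; set Y1 := y ^+ m1.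
set e := d x; set s := d y.
set mm : K := m1.+1%:R; set nn : K := n1.+1%:R.
have du : d (x ^+ n1.+1) = X1 * e * nn by rewrite (derX dM) mulr_natr.
have dv : d (y ^+ m1.+1) = Y1 * s * mm by rewrite (derX dM) mulr_natr.
have h1 := congr1 d Heq.
rewrite d1 !dD !dM dc du dv in h1.
rewrite !exprS -/X1 -/Y1 in Heq h1.
have S0 : mm * ((1 - x * X1) * (1 + A * (x * X1))) * s + nn * (1 + A) * X1 * e * y = 0.
  rewrite (S_alg x y A e s X1 Y1) /=.
  have -> : A * (x * X1) * (y * Y1) + x * X1 + y * Y1 - 1 = 0 by rewrite Heq subrr.
  have -> : A * (x * X1) * (Y1 * s * mm) + A * (X1 * e * nn) * (y * Y1) + X1 * e * nn + Y1 * s * mm = 0.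
    by rewrite -h1; ring.
  by rewrite !(mulr0, mul0r, subrr).
have dmm : d mm = 0 := der_nat dD dM _.
have dnn : d nn = 0 := der_nat dD dM _.
have dA : d A = 0 := dc a.
have hS' := congr1 d S0.
rewrite d0 !(dD, dM, derN dD) d1 dA dmm dnn -/e -/s in hS'.
have hS'' : mm * ((- (e * X1 + x * d X1) * (1 + A * (x * X1)) + (1 - x * X1) * (A * (e * X1 + x * d X1))) * s
        + ((1 - x * X1) * (1 + A * (x * X1))) * d s)
    + nn * (1 + A) * (d X1 * e * y + X1 * d e * y + X1 * e * s) = 0.
  by rewrite -hS'; ring.
have hR : x * d X1 + e * X1 - nn * X1 * e = 0.
  by move: du; rewrite exprS -/X1 dM -/e => ->; ring.
have Kk := key_alg2 S0 hS'' hR.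
have trx' : forall q : {poly F}, q.[0] != 0 -> (map_poly iota q).[x] != 0.
  by move=> q q0; apply: trx; apply: poly_nz.
have x0 : x != 0.
  have := trx 'X; rewrite polyX_eq0 map_polyX hornerX; exact.
have X10 : X1 != 0 by rewrite expf_neq0.
have A10 : 1 + A != 0.
  rewrite -(rmorph1 iota) -rmorphD fmorph_eq0 addrC addr_eq0; exact: a1.
have nn0 : nn != 0 := nzK _ pn.
have mm0 : mm != 0 := nzK _ pm.
have P10 : 1 - x * X1 != 0.
  have := trx' (1 - 'X^(n1.+1)).
  rewrite rmorphB /= map_polyXn rmorph1 !hornerE /= expr0n /= subr0 exprS -/X1.
  by apply; apply: oner_neq0.
have P20 : 1 + A * (x * X1) != 0.
  have := trx' (1 + a *: 'X^(n1.+1)).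
  rewrite rmorphD /= map_polyZ map_polyXn rmorph1 !hornerE /= expr0n /= mulr0 addr0 exprS -/X1 -/A.
  by move=> H; rewrite -mulrA; apply: H; exact: oner_neq0.
have y0 : y != 0.
  apply/eqP => y0; move: Heq; rewrite y0 mul0r mulr0 !addr0 => /eqP.
  have := trx' ('X^(n1.+1) - 1).
  rewrite rmorphB /= map_polyXn rmorph1 !hornerE /= expr0n /= sub0r exprS -/X1.
  move=> H; rewrite -subr_eq0; apply/negP; apply: H; rewrite oppr_eq0; exact: oner_neq0.
have Q0 : mm * (nn - 1) + (- (nn * (1 + A)) - mm * (A - 1)) * (x * X1) +
     mm * A * (nn + 1) * (x * X1) ^+ 2 != 0.
  have := trx _ (q_nz (n1.+1%:R) n0 (nzF _ pm) a0 (nzF 2%N p2n)).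
  rewrite !rmorphD /= !map_polyZ !map_polyXn map_polyC /= !hornerE /=.
  rewrite ?rmorphB ?rmorphD ?rmorphN ?rmorphM ?rmorphB ?rmorphD ?rmorphN ?rmorphM ?rmorph_nat ?rmorph1 -/A -/mm -/nn.
  rewrite exprD !exprS -/X1 => H; apply: contraNneq H => H.
  by apply/eqP; rewrite -[RHS]H; ring.
have e0 : e != 0.
  apply/eqP => e0.
  have s0 : s = 0.
    move: S0; rewrite e0 mulr0 mul0r addr0 => /eqP.
    by rewrite !mulf_eq0 (negbTE mm0) (negbTE P10) (negbTE P20) /= => /eqP.
  have dev : forall P, d (ev2 iota x y P) = 0.
    move=> P; rewrite /ev2 (der_horner dD dM); first by rewrite -/s s0 mulr0.
    move=> i; rewrite coef_map_id0 /=; last by rewrite map_poly0 horner0.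
    by apply: der_map0.
  have [P [Q [Q0' tE]]] := gen t.
  move: Dt1; rewrite tE (der_div dM) ?dev // => /eqP; rewrite eq_sym oner_eq0.
  by [].
have NZ : nn * (1 + A) * e ^+ 3 * y * X1 * (mm * (nn - 1) + (- (nn * (1 + A)) - mm * (A - 1)) * (x * X1) +
     mm * A * (nn + 1) * (x * X1) ^+ 2) != 0 by rewrite !mulf_neq0 // expf_neq0.
apply: contraNneq NZ => W0.
by rewrite -Kk W0 mulr0 add0r.
Qed.
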